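(* Consider the algorithm SR-DFF run with input $m$ on a stream consistent with some representation of size $m$ with at most $k$ exceptions. Then SR-DFF creates at most $m+k$ rules during the entire run.
   Context: Setting. $\mathcal{X}$ is a domain, $\mathcal{Y}$ a finite label set, $\Phi$ a set of binary features on $\mathcal{X}$ closed under negation. A representation of size $m$ is a cover $\mathcal{G}=\{G_1,\dots,G_m\}$ of $\mathcal{X}$ by components with labels $\ell(G)$; each $x$ has a fixed component $G(x)\ni x$; $c^*(x)=\ell(G(x))$; for components $G_i,G_j$ with different labels there is $\phi(G_i,G_j)\in\Phi$ true on all of $G_i$ and false on all of $G_j$, with $\phi(G_j,G_i)=\neg\phi(G_i,G_j)$. Protocol: the learner first gets $x_0$ with label $y_0$; then each example $x_t$ arrives, the learner predicts a label with an explanation example previously seen with that label; on a mistake the teacher gives $y_t=c^*(x_t)$ and $\phi(G(x_t),G(\hat x_t))$, $\hat x_t$ the explanation. An exception is an example on which the feedback is inconsistent with the representation/protocol; a stream is consistent with the representation with at most $k$ exceptions if at most $k$ examples are exceptions. SR-DFF (input $m$): receives $(x_0,y_0)$; maintains a list $L$ of rules, each indexed by a representative example $x$, with a conjunction $C[x]$ of features and a label $\texttt{label}[x]$. On $x_t$: if some $C[\hat x]\in L$ is satisfied by $x_t$, predict $\texttt{label}[\hat x]$ with explanation $\hat x$; if incorrect, receive $y_t,\phi$, set $C[\hat x]:=C[\hat x]\wedge\neg\phi$, and delete the rule if $C[\hat x]$ has at least $m$ features. Otherwise predict $y_0$ with explanation $x_0$; if incorrect, receive $y_t,\phi$ and add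 (create) a new rule with empty conjunction $C[x_t]$ and $\texttt{label}[x_t]=y_t$. *)

(* Defs.v *)
From mathcomp Require Import all_boot.
Set Implicit Arguments. Unset Strict Implicit. Unset Printing Implicit Defensive.

(* Features: an abstract type [F] of binary features on [X], evaluated by [ev];
   closure of the feature set under negation is given by [neg] with
   [ev (neg f) x = ~~ ev f x] (a hypothesis of the theorem). *)

(* A representation of size m: components G_i (i < m) with labels, a fixed
   component [comp_of x] containing each x (so the G_i cover X), and for every
   pair of components with different labels a separating feature [sep i j]
   true on G_i, false on G_j, with sep j i = neg (sep i j). *)
Record representation (X : Type) (Y : finType) (F : eqType)
    (ev : F -> X -> bool) (neg : F -> F) (m : nat) := Representation {
  comp_set : 'I_m -> X -> Prop;
  comp_lab : 'I_m -> Y;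
  comp_of : X -> 'I_m;
  comp_ofP : forall x, comp_set (comp_of x) x;
  sep : 'I_m -> 'I_m -> F;
  sep_true : forall i j, comp_lab i != comp_lab j ->
    forall x, comp_set i x -> ev (sep i j) x;
  sep_false : forall i j, comp_lab i != comp_lab j ->
    forall x, comp_set j x -> ~~ ev (sep i j) x;
  sep_anti : forall i j, comp_lab i != comp_lab j -> sep j i = neg (sep i j)
}.

Definition cstar X Y F ev neg m (R : @representation X Y F ev neg m) (x : X) : Y :=
  comp_lab R (comp_of R x).

(* Feedback (y, phi) on a mistake at x with explanation xh is an exception
   iff it is inconsistent with the representation: y <> c*(x), or phi is not
   phi(G(x), G(xh)) (which in particular must exist, i.e. labels differ). *)
Definition mistake_exception X Y F ev neg m (R : @representation X Y F ev neg m)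
    (x : X) (y : Y) (f : F) (xh : X) : bool :=
  [|| y != cstar R x,
      comp_lab R (comp_of R x) == comp_lab R (comp_of R xh)
    | f != sep R (comp_of R x) (comp_of R xh)].

Record rule (X : Type) (Y : Type) (F : Type) := Rule {
  rrep : X; rconj : seq F; rlab : Y }.

Definition sat X F (ev : F -> X -> bool) (C : seq F) (x : X) : bool :=
  all (fun f => ev f x) C.

(* One step of SR-DFF (input m, initial example (x0,y0)) on example x, where
   the teacher's label is y and its feature (used only on a mistake) is f.
   The output records the new rule list, whether a rule was created, and
   whether the example is an exception. If several rules are satisfied, any
   one of them may be used (nondeterminism). *)
Inductive srdff_step X Y F ev neg m (R : @representation X Y F ev neg m)
    (x0 : X) (y0 : Y)
    : seq (rule X Y F) -> X -> Y -> F -> seq (rule X Y F) -> bool -> bool -> Prop :=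
| StepRuleCorrect L1 r L2 x y f :
    sat ev (rconj r) x -> rlab r = y ->
    srdff_step R x0 y0 (L1 ++ r :: L2) x y f (L1 ++ r :: L2) false (y != cstar R x)
| StepRuleMistake L1 r L2 x y f :
    sat ev (rconj r) x -> rlab r != y ->
    srdff_step R x0 y0 (L1 ++ r :: L2) x y f
      (if m <= size (neg f :: rconj r) then L1 ++ L2
       else L1 ++ Rule (rrep r) (neg f :: rconj r) (rlab r) :: L2)
      false (mistake_exception R x y f (rrep r))
| StepDefaultCorrect L x y f :
    ~~ has (fun r => sat ev (rconj r) x) L -> y0 = y ->
    srdff_step R x0 y0 L x y f L false (y != cstar R x)
| StepDefaultMistake L x y f :
    ~~ has (fun r => sat ev (rconj r) x) L -> y0 != y ->
    srdff_step R x0 y0 L x y f (rcons L (Rule x [::] y)) true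
      (mistake_exception R x y f x0).

(* A run on a finite stream of (example, teacher label, teacher feature):
   [srdff_run R x0 y0 L s L' n e] : starting from rule list L, processing s
   leads to L', creating n rules, with e exceptions among the examples of s. *)
Inductive srdff_run X Y F ev neg m (R : @representation X Y F ev neg m)
    (x0 : X) (y0 : Y)
    : seq (rule X Y F) -> seq (X * Y * F) -> seq (rule X Y F) -> nat -> nat -> Prop :=
| RunNil L : srdff_run R x0 y0 L [::] L 0 0
| RunCons L x y f s L' b e L'' n k :
    srdff_step R x0 y0 L x y f L' b e ->
    srdff_run R x0 y0 L' s L'' n k ->
    srdff_run R x0 y0 L ((x, y, f) :: s) L'' (b + n) (e + k).

(* Main.v *)
Require Import Defs.
From mathcomp Require Import all_boot.
From mathcomp Require Import zify.
Set Implicit Arguments. Unset Strict Implicit. Unset Printing Implicit Defensive.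

Definition goodb X (Y : finType) (F : eqType) ev neg m
  (R : @representation X Y F ev neg m) (r : rule X Y F) : bool :=
  let i := comp_of R (rrep r) in
  uniq (rconj r) &&
  all (fun f => f \in [seq neg (sep R j i) | j <- enum [pred j | comp_lab R j != comp_lab R i]])
      (rconj r).

Definition Sset X (Y : finType) (F : eqType) ev neg m
  (R : @representation X Y F ev neg m) (L : seq (rule X Y F)) : {set 'I_m} :=
  [set i | has (fun r => goodb R r && (comp_of R (rrep r) == i)) L].

Lemma good_size X (Y : finType) (F : eqType) ev neg m
  (R : @representation X Y F ev neg m) r :
  goodb R r -> size (rconj r) < m.
Proof.
case/andP=> U /allP A.
set i := comp_of R (rrep r).
have H1 : size (rconj r) <= size [seq neg (sep R j i) | j <- enum [pred j | comp_lab R j != comp_lab R i]].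
  by apply: uniq_leq_size => // f /A.
rewrite size_map -cardE in H1.
apply: (leq_ltn_trans H1).
have : #|[pred j | comp_lab R j != comp_lab R i]| < #|'I_m|.
  apply: proper_card; apply/properP; split.
    by apply/subsetP.
  by exists i => //=; rewrite inE eqxx.
by rewrite card_ord.
Qed.

Lemma good_sat X (Y : finType) (F : eqType) ev neg
  (hneg : forall f x, ev (neg f) x = ~~ ev f x) m
  (R : @representation X Y F ev neg m) r x :
  goodb R r -> comp_of R x = comp_of R (rrep r) -> sat ev (rconj r) x.
Proof.
case/andP=> _ /allP A Hx; apply/allP=> f /A /mapP [j]; rewrite mem_enum inE => Hl ->.
rewrite hneg; apply: (sep_false Hl); rewrite -Hx; exact: comp_ofP.
Qed.

Lemma Sset_sub X (Y : finType) (F : eqType) ev neg m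
  (R : @representation X Y F ev neg m) L1 L2 r r' :
  (goodb R r -> goodb R r' /\ rrep r' = rrep r) ->
  Sset R (L1 ++ r :: L2) \subset Sset R (L1 ++ r' :: L2).
Proof.
move=> H; apply/subsetP=> i; rewrite !inE !has_cat /=.
case/orP=> [->|/orP[/andP[g e]|->]]; rewrite ?orbT //.
by case: (H g) => g' e'; rewrite g' e' e orbT.
Qed.

Lemma Sset_del X (Y : finType) (F : eqType) ev neg m
  (R : @representation X Y F ev neg m) L1 L2 r :
  Sset R (L1 ++ r :: L2) \subset comp_of R (rrep r) |: Sset R (L1 ++ L2).
Proof.
apply/subsetP=> i; rewrite !inE !has_cat /=.
case/orP=> [->|/orP[/andP[g /eqP e]|->]]; rewrite ?orbT //.
by rewrite e eqxx.
Qed.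

Lemma Sset_ins X (Y : finType) (F : eqType) ev neg m
  (R : @representation X Y F ev neg m) L1 L2 r :
  Sset R (L1 ++ L2) \subset Sset R (L1 ++ r :: L2).
Proof.
apply/subsetP=> i; rewrite !inE !has_cat /=.
by case/orP=> ->; rewrite ?orbT.
Qed.

Lemma step_pot X (Y : finType) (F : eqType) ev neg
  (hneg : forall f x, ev (neg f) x = ~~ ev f x) m
  (R : @representation X Y F ev neg m) x0 y0 L x y f L' b ex :
  srdff_step R x0 y0 L x y f L' b ex ->
  b + #|Sset R L| <= #|Sset R L'| + ex.
Proof.
case=> {L x y f L' b ex}.
- by move=> *; rewrite leq_addr.
- move=> L1 r L2 x y f Hs Hl.
  case: ifP => Hm; case Ex: (mistake_exception R x y f (rrep r)).
  + rewrite add0n addn1; apply: (leq_trans (subset_leq_card (Sset_del R L1 L2 r))).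
    by rewrite cardsU1 -add1n leq_add2r leq_b1.
  + rewrite addn0 add0n.
    have Hg : ~~ goodb R r.
      apply/negP=> g.
      move/negbT: Ex; rewrite /mistake_exception !negb_or => /and3P[_ Hlab /negPn /eqP Hf].
      suff : goodb R (Rule (rrep r) (neg f :: rconj r) (rlab r)) by move/good_size; rewrite ltnNge Hm.
      case/andP: g => U /allP A; rewrite /goodb /= U andbT; apply/andP; split.
        apply/negP=> /(allP Hs); rewrite hneg Hf; apply/negP; rewrite negbK.
        apply: (sep_true Hlab); exact: comp_ofP.
      apply/andP; split; last exact/allP.
      by rewrite Hf; apply: map_f; rewrite mem_enum inE.
    apply: subset_leq_card; apply/subsetP=> i; rewrite !inE !has_cat /=.
    by rewrite (negbTE Hg) /=.
  + rewrite add0n addn1; apply: (leq_trans (subset_leq_card (Sset_del R L1 L2 r))).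
    rewrite cardsU1 addnC -addn1; apply: leq_add; last exact: leq_b1.
    exact: subset_leq_card (Sset_ins R L1 L2 _).
  + rewrite addn0 add0n; apply: subset_leq_card; apply: Sset_sub => g.
    split=> //.
    move/negbT: Ex; rewrite /mistake_exception !negb_or => /and3P[_ Hlab /negPn /eqP Hf].
    case/andP: g => U /allP A; rewrite /goodb /=; apply/andP; split.
      rewrite U andbT; apply/negP=> /(allP Hs); rewrite hneg Hf; apply/negP; rewrite negbK.
      apply: (sep_true Hlab); exact: comp_ofP.
    apply/andP; split; last exact/allP.
    by rewrite Hf; apply: map_f; rewrite mem_enum inE.
- by move=> *; rewrite leq_addr.
- move=> L x y f Hn Hy.
  have Hsub : Sset R L \subset Sset R (rcons L (Rule x [::] y)).
    by apply/subsetP=> i; rewrite !inE -cats1 has_cat => ->.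
  case Ex: (mistake_exception R x y f x0).
  + by rewrite add1n addn1 ltnS subset_leq_card.
  + rewrite addn0 add1n.
    have Hi : comp_of R x \notin Sset R L.
      rewrite inE; apply: contra Hn; apply: sub_has => r /andP [g /eqP e].
      by apply: (good_sat hneg g); rewrite e.
    have : comp_of R x |: Sset R L \subset Sset R (rcons L (Rule x [::] y)).
      rewrite subUset Hsub andbT sub1set inE -cats1 has_cat /= eqxx.
      by rewrite /goodb /= orbT.
    by move/subset_leq_card; rewrite cardsU1 Hi.
Qed.

Lemma run_pot X (Y : finType) (F : eqType) ev neg
  (hneg : forall f x, ev (neg f) x = ~~ ev f x) m
  (R : @representation X Y F ev neg m) x0 y0 L s L' n e :
  srdff_run R x0 y0 L s L' n e ->
  n + #|Sset R L| <= #|Sset R L'| + e.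
Proof.
elim=> {L s L' n e} [L|L x y f s L' b e L'' n k St _ IH]; first by rewrite add0n addn0.
have := step_pot hneg St.
move: IH; lia.
Qed.

Theorem lemma4 (X : Type) (Y : finType) (F : eqType)
    (ev : F -> X -> bool) (neg : F -> F)
    (negP : forall f x, ev (neg f) x = ~~ ev f x)
    (m k : nat) (R : @representation X Y F ev neg m)
    (x0 : X) (y0 : Y) (s : seq (X * Y * F))
    (L : seq (rule X Y F)) (n e : nat) :
  srdff_run R x0 y0 [::] s L n e ->
  (y0 != cstar R x0) + e <= k ->
  n <= m + k.
Proof.
move=> /(run_pot negP) H Hk.
have E0 : #|Sset R [::]| = 0 by apply/eqP; rewrite cards_eq0; apply/eqP/setP=> i; rewrite !inE.
rewrite E0 addn0 in H.
have Hm : #|Sset R L| <= m by apply: leq_trans (max_card _) _; rewrite card_ord.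
apply: (leq_trans H); apply: leq_add => //.
exact: leq_trans (leq_addl _ _) Hk.
Qed.
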